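(* Let $W$ be a real 2-dimensional vector space, $m\ge2$, and let $\varphi:S^mW^*\hookrightarrow(W^* )^{\otimes m}$ be the Veronese factorization structure, with (common) factorization curve $\psi:\mathbb{P}(W)\to\mathbb{P}(S^mW^* )$, $\psi(\ell)=(\ell^0)^{\otimes m}$. Let $\sigma^\vee\subset S^mW^*$ be a full-dimensional pointed convex polyhedral cone each of whose extremal rays lies on a line $\psi(t)$ for some $t\in\mathbb{P}(W)$. Then $\sigma^\vee$ is a cone over a simplicial polytope: every facet of $\sigma^\vee$ contains exactly $m$ extremal rays, and these are linearly independent.
   Context: $S^mW^*\subset(W^* )^{\otimes m}$ is the subspace of symmetric tensors (of dimension $m+1$); $\ell^0\subset W^*$ denotes the annihilator of a line $\ell\subset W$, and $(\ell^0)^{\otimes m}$ is the line spanned by $\alpha\otimes\cdots\otimes\alpha$ for $0\ne\alpha\in\ell^0$ (its image is the rational normal curve of degree $m$). A convex polyhedral cone is the set of nonnegative combinations of finitely many vectors; it is pointed if it contains no nontrivial linear subspace; an extremal ray is a 1-dimensional face, a facet a codimension-one face. *)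

(* Defs.v *)
From HB Require Import structures.
From mathcomp Require Import all_boot all_order all_algebra.
From mathcomp Require Import reals.
Set Implicit Arguments. Unset Strict Implicit. Unset Printing Implicit Defensive.
Import Order.TTheory GRing.Theory Num.Theory.
Local Open Scope ring_scope.

Section Cones.
Variables (R : realFieldType) (n : nat).
Notation vec := 'rV[R]_n.

Definition vset := vec -> Prop.

Definition subs (A B : vset) : Prop := forall x, A x -> B x.
Definition seteq (A B : vset) : Prop := forall x, A x <-> B x.

(* standard inner product, used to pair with linear functionals *)
Definition dotv (u x : vec) : R := \sum_(i < n) u 0 i * x 0 i.

Definition pcone (gens : seq vec) : vset :=
  fun x => exists c : 'I_(size gens) -> R,
    (forall i, 0 <= c i) /\ x = \sum_(i < size gens) c i *: gens`_i.

Definition ray (v : vec) : vset := fun x => exists c : R, 0 <= c /\ x = c *: v.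

Definition line (v : vec) : vset := fun x => exists c : R, x = c *: v.

Definition pointed (S : vset) : Prop :=
  forall v : vec, (forall t : R, S (t *: v)) -> v = 0.

Definition span_dim (S : vset) (d : nat) : Prop :=
  exists s : seq vec, [/\ size s = d, (forall x, x \in s -> S x), free s &
                          forall x, S x -> x \in <<s>>%VS].

Definition full_dim (S : vset) : Prop := span_dim S n.

Definition is_face (S F : vset) : Prop :=
  exists u : vec, (forall x, S x -> 0 <= dotv u x) /\
                  seteq F (fun x => S x /\ dotv u x = 0).

Definition is_facet (S F : vset) : Prop :=
  is_face S F /\ exists d, span_dim S d.+1 /\ span_dim F d.

Definition is_extremal_ray (S E : vset) : Prop := is_face S E /\ span_dim E 1.

End Cones.

(* Veronese structure for W = R^2.  A point t of P(W) is represented by a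
   nonzero w in W; its annihilator l^0 in W^* is spanned by alpha = (-w_1, w_0).
   S^m W^* is identified with R^(m+1): a symmetric tensor T is sent to the
   vector whose k-th coordinate is the entry of T at the multi-index
   (0,...,0,1,...,1) with k ones (by symmetry this determines T).  Under this
   identification alpha^{(x) m} has coordinates a^(m-k) b^k. *)
Definition annih (R : ringType) (w : 'rV[R]_2) : 'rV[R]_2 :=
  \row_(j < 2) (if j == 0 :> nat then - w 0 1 else w 0 0).

Definition psi (R : ringType) (m : nat) (w : 'rV[R]_2) : 'rV[R]_(m.+1) :=
  let a := annih w 0 0 in let b := annih w 0 1 in
  \row_(k < m.+1) (a ^+ (m - k) * b ^+ k).

(* Main.v *)
Require Import Defs.
From HB Require Import structures.
From mathcomp Require Import all_boot all_order all_algebra.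
From mathcomp Require Import reals.
From Stdlib Require Import Classical.
From mathcomp Require Import ring lra zify.
Import Order.TTheory GRing.Theory Num.Theory.
Local Open Scope ring_scope.
Set Implicit Arguments. Unset Strict Implicit. Unset Printing Implicit Defensive.

Section ConeLib.
Variables (R : realFieldType) (n : nat).
Notation vec := 'rV[R]_n.

Lemma dotvDr (u x y : vec) : dotv u (x + y) = dotv u x + dotv u y.
Proof. by rewrite /dotv -big_split /=; apply: eq_bigr => i _; rewrite mxE mulrDr. Qed.
Lemma dotvDl (u v x : vec) : dotv (u + v) x = dotv u x + dotv v x.
Proof. by rewrite /dotv -big_split /=; apply: eq_bigr => i _; rewrite mxE mulrDl. Qed.
Lemma dotvZr (u x : vec) c : dotv u (c *: x) = c * dotv u x.
Proof. by rewrite /dotv mulr_sumr; apply: eq_bigr => i _; rewrite mxE mulrCA. Qed.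
Lemma dotvZl (u x : vec) c : dotv (c *: u) x = c * dotv u x.
Proof. by rewrite /dotv mulr_sumr; apply: eq_bigr => i _; rewrite mxE mulrA. Qed.
Lemma dotv0r (u : vec) : dotv u 0 = 0.
Proof. by rewrite -(scale0r (0 : vec)) dotvZr mul0r. Qed.
Lemma dotv0l (u : vec) : dotv 0 u = 0.
Proof. by rewrite -(scale0r (0 : vec)) dotvZl mul0r. Qed.
Lemma dotvNr (u x : vec) : dotv u (- x) = - dotv u x.
Proof. by rewrite -scaleN1r dotvZr mulN1r. Qed.
Lemma dotvNl (u x : vec) : dotv (- u) x = - dotv u x.
Proof. by rewrite -scaleN1r dotvZl mulN1r. Qed.
Lemma dotvBr (u x y : vec) : dotv u (x - y) = dotv u x - dotv u y.
Proof. by rewrite dotvDr dotvNr. Qed.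
Lemma dotvBl (u v x : vec) : dotv (u - v) x = dotv u x - dotv v x.
Proof. by rewrite dotvDl dotvNl. Qed.

Lemma pcone_nil (x : vec) : pcone [::] x <-> x = 0.
Proof.
split; first by case=> c [_ ->]; rewrite big_ord0.
by move=> ->; exists (fun _ => 0); split=> //; rewrite big_ord0.
Qed.

Lemma pcone_cons (a : vec) L x :
  pcone (a :: L) x <-> exists t y, [/\ 0 <= t, pcone L y & x = t *: a + y].
Proof.
split.
  case=> c [c0 ->]; exists (c ord0), (\sum_(i < size L) c (lift ord0 i) *: L`_i).
  split => //; last by rewrite big_ord_recl.
  by exists (fun i => c (lift ord0 i)); split.
case=> t [y [t0 [c [c0 ->]] ->]].
exists (fun i : 'I_(size L).+1 => if unlift ord0 i is Some j then c j else t).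
split; first by move=> i; case: (unlift ord0 i).
rewrite big_ord_recl /= unlift_none; congr (_ + _).
by apply: eq_bigr => i _; rewrite liftK.
Qed.

Lemma pcone0 L : pcone L (0 : vec).
Proof.
elim: L => [|a L IH]; first by apply/pcone_nil.
by apply/pcone_cons; exists 0, 0; rewrite scale0r addr0.
Qed.

Lemma pconeD L (x y : vec) : pcone L x -> pcone L y -> pcone L (x + y).
Proof.
elim: L x y => [|a L IH] x y.
  by move=> /pcone_nil -> /pcone_nil ->; apply/pcone_nil; rewrite addr0.
move=> /pcone_cons [t [x' [t0 hx ->]]] /pcone_cons [s [y' [s0 hy ->]]].
apply/pcone_cons; exists (t + s), (x' + y'); split; first by rewrite addr_ge0.
  exact: IH.
by rewrite scalerDl -!addrA; congr (_ + _); rewrite addrCA.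
Qed.

Lemma pconeZ L (x : vec) t : 0 <= t -> pcone L x -> pcone L (t *: x).
Proof.
move=> t0; elim: L x => [|a L IH] x.
  by move=> /pcone_nil ->; apply/pcone_nil; rewrite scaler0.
move=> /pcone_cons [s [y [s0 hy ->]]].
apply/pcone_cons; exists (t * s), (t *: y); split; first by rewrite mulr_ge0.
  exact: IH.
by rewrite scalerDr scalerA.
Qed.

Lemma pcone_mem L (a : vec) : a \in L -> pcone L a.
Proof.
elim: L => [//|b L IH]; rewrite inE => /orP [/eqP ->|/IH h].
  by apply/pcone_cons; exists 1, 0; split; [exact: ler01|exact: pcone0|rewrite scale1r addr0].
by apply/pcone_cons; exists 0, a; split => //; rewrite scale0r add0r.
Qed.

Lemma pcone_sub L L' (x : vec) :
  (forall a, a \in L -> pcone L' a) -> pcone L x -> pcone L' x.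
Proof.
elim: L x => [|a L IH] x hL.
  by move=> /pcone_nil ->; exact: pcone0.
move=> /pcone_cons [t [y [t0 hy ->]]]; apply: pconeD.
  by apply: pconeZ => //; apply: hL; rewrite inE eqxx.
by apply: IH => // b hb; apply: hL; rewrite inE hb orbT.
Qed.

Lemma pcone_dot_ge0 L (u x : vec) :
  (forall a, a \in L -> 0 <= dotv u a) -> pcone L x -> 0 <= dotv u x.
Proof.
elim: L x => [|a L IH] x hL.
  by move=> /pcone_nil ->; rewrite dotv0r.
move=> /pcone_cons [t [y [t0 hy ->]]]; rewrite dotvDr dotvZr addr_ge0 //.
  by rewrite mulr_ge0 // hL // inE eqxx.
by apply: IH => // b hb; apply: hL; rewrite inE hb orbT.
Qed.

Lemma pcone_span L (x : vec) : pcone L x -> x \in <<L>>%VS.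
Proof.
elim: L x => [|a L IH] x.
  by move=> /pcone_nil ->; rewrite mem0v.
move=> /pcone_cons [t [y [t0 hy ->]]]; rewrite span_cons.
apply: memv_add; first by apply: memvZ; exact: memv_line.
exact: IH.
Qed.

Lemma pcone_map (f : vec -> vec) L x :
  f 0 = 0 -> (forall u v, f (u + v) = f u + f v) -> (forall c u, f (c *: u) = c *: f u) ->
  pcone (map f L) x -> exists x0, pcone L x0 /\ x = f x0.
Proof.
move=> f0 fD fZ; elim: L x => [|a L IH] x /=.
  by move=> /pcone_nil ->; exists 0; split => //; exact: pcone0.
move=> /pcone_cons [t [y [t0 /IH [y0 [hy0 ->]] ->]]].
exists (t *: a + y0); split; last by rewrite fD fZ.
by apply/pcone_cons; exists t, y0.
Qed.

End ConeLib.

Section Farkas.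
Variables (R : realFieldType) (n : nat).
Notation vec := 'rV[R]_n.

Lemma farkas_k k : forall (L : seq vec) b, size L = k ->
  pcone L b \/ exists y, (forall a, a \in L -> 0 <= dotv y a) /\ dotv y b < 0.
Proof.
elim: k => [|k IH] L b.
  case: L => // _; case: (eqVneq b 0) => [->|bn0]; first by left; exact: pcone0.
  right; exists (- b); split => //.
  rewrite dotvNl oppr_lt0 /dotv lt_neqAle; apply/andP; split.
    rewrite eq_sym psumr_neq0; last by move=> i _; rewrite -expr2 sqr_ge0.
    apply: contraR bn0; rewrite -all_predC => /allP h; apply/eqP/rowP => i.
    have := h i (mem_index_enum i); rewrite /= -expr2 -leNgt => hi.
    by rewrite mxE; apply/eqP; rewrite -sqrf_eq0 eq_le hi sqr_ge0.
  by apply: sumr_ge0 => i _; rewrite -expr2 sqr_ge0.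
case: L => // a L [sL].
case: (IH L b sL) => [hb|[y [hy yb]]].
  by left; apply/pcone_cons; exists 0, b; rewrite scale0r add0r.
case: (lerP 0 (dotv y a)) => ya.
  right; exists y; split => // c; rewrite inE => /orP [/eqP ->//|]; exact: hy.
pose f := fun v : vec => dotv y a *: v - dotv y v *: a.
have f0 : f 0 = 0 by rewrite /f scaler0 dotv0r scale0r subr0.
have fD : forall u v, f (u + v) = f u + f v.
  by move=> u v; rewrite /f dotvDr scalerDr scalerDl opprD addrACA.
have fZ : forall c u, f (c *: u) = c *: f u.
  by move=> c u; rewrite /f dotvZr scalerBr !scalerA mulrC.
case: (IH (map f L) (f b)); first by rewrite size_map.
  move=> /(pcone_map f0 fD fZ) [x0 [hx0 hfx]]; left.
  have yx0 : 0 <= dotv y x0 by exact: pcone_dot_ge0 hy hx0.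
  apply/pcone_cons; exists ((dotv y b - dotv y x0) / dotv y a), x0; split => //.
    rewrite ler_ndivlMr // mul0r subr_le0; apply: le_trans yx0; exact: ltW.
  have ya0 : dotv y a != 0 by rewrite lt_eqF.
  apply: (scalerI ya0); rewrite scalerDr scalerA mulrCA mulfV // mulr1.
  move: hfx; rewrite /f => /(congr1 (fun v => v + dotv y b *: a)); rewrite subrK => ->.
  by rewrite scalerBl addrAC [in RHS]addrAC (addrC (dotv y a *: x0)).
move=> [y' [hy' y'b]]; right.
exists (dotv y a *: y' - dotv y' a *: y); split.
  move=> c; rewrite inE => /orP [/eqP ->|hc].
    by rewrite dotvBl !dotvZl mulrC subrr.
  have := hy' (f c) (map_f f hc); rewrite /f dotvBr !dotvZr dotvBl !dotvZl.
  by rewrite [dotv y' a * _]mulrC.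
move: y'b; rewrite /f dotvBr !dotvZr dotvBl !dotvZl.
by rewrite [dotv y' a * _]mulrC.
Qed.

End Farkas.

Section Exposed.
Variables (R : realFieldType) (n : nat).
Notation vec := 'rV[R]_n.

Lemma farkas (L : seq vec) b :
  pcone L b \/ exists y, (forall a, a \in L -> 0 <= dotv y a) /\ dotv y b < 0.
Proof. exact: (@farkas_k _ _ (size L) L b (erefl _)). Qed.

Lemma minimal_gen_k k : forall L : seq vec, size L = k -> exists M,
  [/\ {subset M <= L}, (forall a, a \in L -> pcone M a) &
      (forall a, a \in M -> ~ pcone (rem a M) a)].
Proof.
elim/ltn_ind: k => k IH L sL.
case: (classic (exists a, a \in L /\ pcone (rem a L) a)) => [[a [aL ha]]|h].
  have sr : (size (rem a L) < k)%N by rewrite size_rem // -sL; case: (L) aL.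
  have [M [MsL LM Mmin]] := IH _ sr _ erefl.
  exists M; split => // [b /MsL /mem_rem //|b bL].
  have haM : pcone M a by apply: pcone_sub ha.
  by case: (eqVneq b a) => [->//|ba]; apply: LM; rewrite rem_mem.
exists L; split => // [a|a aL ha]; first exact: pcone_mem.
by apply: h; exists a.
Qed.

End Exposed.

Section Exposed2.
Variables (R : realFieldType) (n : nat).
Notation vec := 'rV[R]_n.

Lemma minimal_gen (L : seq vec) : exists M,
  [/\ {subset M <= L}, (forall a, a \in L -> pcone M a) &
      (forall a, a \in M -> ~ pcone (rem a M) a)].
Proof. exact: (@minimal_gen_k _ _ (size L) L erefl). Qed.

Lemma pcone_filter0 (v : vec) L x : (forall g, g \in L -> 0 <= dotv v g) ->
  pcone L x -> dotv v x = 0 -> pcone [seq g <- L | dotv v g == 0] x.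
Proof.
elim: L x => [|a L IH] x hL /=; first by [].
have hL' : forall g, g \in L -> 0 <= dotv v g by move=> g hg; apply: hL; rewrite inE hg orbT.
have ha : 0 <= dotv v a by apply: hL; rewrite inE eqxx.
move=> /pcone_cons [t [y [t0 hy ->]]]; rewrite dotvDr dotvZr => /eqP.
rewrite paddr_eq0 ?mulr_ge0 ?(pcone_dot_ge0 hL' hy) // => /andP [/eqP h1 /eqP h2].
case: eqP => [ea|ea].
  by apply/pcone_cons; exists t, y; split => //; exact: IH.
move: h1 => /eqP; rewrite mulf_eq0 => /orP [/eqP t00|/eqP //].
by rewrite t00 scale0r add0r; exact: IH.
Qed.

Lemma pcone_dot0 (v : vec) L x : (forall g, g \in L -> dotv v g = 0) ->
  pcone L x -> dotv v x = 0.
Proof.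
elim: L x => [|a L IH] x hL; first by move=> /pcone_nil ->; rewrite dotv0r.
move=> /pcone_cons [t [y [t0 hy ->]]]; rewrite dotvDr dotvZr hL ?inE ?eqxx // mulr0 add0r.
by apply: IH hy => g hg; apply: hL; rewrite inE hg orbT.
Qed.

Lemma pcone_pos0 (v : vec) L x : (forall g, g \in L -> 0 < dotv v g) ->
  pcone L x -> dotv v x = 0 -> x = 0.
Proof.
move=> hL hx hv.
have := pcone_filter0 (fun g hg => ltW (hL g hg)) hx hv.
have -> : [seq g <- L | dotv v g == 0] = [::].
  apply/eqP; rewrite -[_ == _]negbK -has_filter; apply/hasPn => g /hL.
  by rewrite lt0r => /andP [].
by move/pcone_nil.
Qed.

Lemma sum_ge_term (T : eqType) (s : seq T) (F : T -> R) g :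
  (forall h, 0 <= F h) -> g \in s -> F g <= \sum_(h <- s) F h.
Proof.
move=> F0; elim: s => [//|a s IH]; rewrite inE big_cons => /orP [/eqP ->|hg].
  by rewrite lerDl sumr_ge0.
by rewrite (le_trans (IH hg)) // lerDr.
Qed.

Lemma pointed_opp (gens : seq vec) b :
  pointed (pcone gens) -> pcone gens b -> pcone gens (- b) -> b = 0.
Proof.
move=> hp hb hnb; apply: hp => t; case: (lerP 0 t) => t0; first exact: pconeZ.
have -> : t *: b = (- t) *: (- b) by rewrite scaleNr scalerN opprK.
by apply: pconeZ => //; rewrite oppr_ge0 ltW.
Qed.

Variables (gens : seq vec) (u : vec) (M : seq vec).
Hypothesis hpt : pointed (pcone gens).
Hypothesis hu : forall x, pcone gens x -> 0 <= dotv u x.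
Hypothesis hMS : forall a, a \in M -> [/\ a != 0, dotv u a = 0 & pcone gens a].
Hypothesis hMmin : forall a, a \in M -> ~ pcone (rem a M) a.
Hypothesis hMgen : forall x, pcone gens x -> dotv u x = 0 -> pcone M x.

Lemma pconeM_S x : pcone M x -> pcone gens x.
Proof. by apply: pcone_sub => a /hMS []. Qed.

Section FixA.
Variable a : vec.
Hypothesis aM : a \in M.

Lemma sep_b b : b \in rem a M -> exists y,
  [/\ dotv y a = 0, (forall c, c \in rem a M -> 0 <= dotv y c) & 0 < dotv y b].
Proof.
move=> bM.
case: (farkas [:: a, - a & rem a M] (- b)).
  move=> /pcone_cons [t [y1 [t0 /pcone_cons [s [z [s0 hz ->]]] heq]]].
  exfalso.
  have bz : pcone (rem a M) b by exact: pcone_mem.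
  have hbS : pcone gens b by exact: pconeM_S (pcone_sub (fun c hc => pcone_mem (mem_rem hc)) bz).
  have hzS : pcone gens z by exact: pconeM_S (pcone_sub (fun c hc => pcone_mem (mem_rem hc)) hz).
  have haS : pcone gens a by case: (hMS aM).
  case: (lerP 0 (t - s)) => ts.
    have := pointed_opp hpt hbS; rewrite heq.
    have -> : t *: a + (s *: - a + z) = (t - s) *: a + z by rewrite scalerBl scalerN addrA.
    move=> /(_ (pconeD (pconeZ ts haS) hzS)) b0.
    by case: (hMS (mem_rem bM)); rewrite b0 eqxx.
  apply: (hMmin aM).
  have e : b + z = (s - t) *: a.
    apply/rowP => i; have := congr1 (fun v : 'rV[R]_n => v 0 i) heq; rewrite !mxE => h.
    by rewrite -[b 0 i]opprK h; ring.
  have ea : a = (s - t)^-1 *: (b + z).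
    have st : s - t != 0 by rewrite subr_eq0 gt_eqF // -subr_lt0.
    by rewrite e scalerA mulVf // scale1r.
  rewrite [X in pcone _ X]ea.
  apply: (pconeZ _ (pconeD bz hz)).
  by rewrite invr_ge0 subr_ge0 ltW // -subr_lt0.
move=> [y [hy yb]]; exists y; split.
- have h1 : 0 <= dotv y a by apply: hy; rewrite inE eqxx.
  have h2 : 0 <= dotv y (- a) by apply: hy; rewrite !inE eqxx orbT.
  rewrite dotvNr oppr_ge0 in h2.
  by apply/eqP; rewrite eq_le h2 h1.
- by move=> c hc; apply: hy; rewrite !inE hc !orbT.
- by rewrite dotvNr oppr_lt0 in yb.
Qed.

Lemma sep_w (K : seq vec) : {subset K <= rem a M} -> exists w,
  [/\ dotv w a = 0, (forall c, c \in rem a M -> 0 <= dotv w c) &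
      (forall b, b \in K -> 0 < dotv w b)].
Proof.
elim: K => [|b K IH] hK.
  by exists 0; split => [|c _|//]; rewrite dotv0l.
have [w [wa wc wb]] : exists w, [/\ dotv w a = 0, (forall c, c \in rem a M -> 0 <= dotv w c) &
      (forall b, b \in K -> 0 < dotv w b)].
  by apply: IH => c hc; apply: hK; rewrite inE hc orbT.
have [y [ya yc yb]] := sep_b (hK b (mem_head _ _)).
exists (w + y); split.
- by rewrite dotvDl wa ya addr0.
- by move=> c hc; rewrite dotvDl addr_ge0 // ?wc ?yc.
- move=> c; rewrite inE => /orP [/eqP ->|hc]; rewrite dotvDl.
    by rewrite ltr_wpDl // wc // hK // mem_head.
  by rewrite ltr_wpDr // ?wb // yc // hK // inE hc orbT.
Qed.

Lemma ray_face : is_face (pcone gens) (ray a).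
Proof.
have [aa0 ua aS] := hMS aM.
have [w [wa wc wb]] := @sep_w (rem a M) (fun c hc => hc).
have wM : forall c, c \in M -> 0 <= dotv w c.
  by move=> c cM; case: (eqVneq c a) => [->|ca]; [rewrite wa|apply: wc; rewrite rem_mem].
pose lam := 1 + \sum_(g <- gens) (if dotv u g <= 0 then 0 else `|dotv w g| / dotv u g).
pose W := w + lam *: u.
have hW : forall g, g \in gens -> 0 <= dotv W g /\ (dotv u g != 0 -> 0 < dotv W g).
  move=> g gg; rewrite /W dotvDl dotvZl.
  have ug : 0 <= dotv u g by apply: hu; exact: pcone_mem.
  case: (eqVneq (dotv u g) 0) => [ug0|ugn0].
    rewrite ug0 mulr0 addr0; split=> //; apply: (pcone_dot_ge0 wM); apply: hMgen => //.
    exact: pcone_mem.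
  have ugp : 0 < dotv u g by rewrite lt0r ugn0.
  have hl : 1 + `|dotv w g| / dotv u g <= lam.
    rewrite /lam lerD2l.
    have := @sum_ge_term _ gens (fun g => if dotv u g <= 0 then 0 else `|dotv w g| / dotv u g) g.
    have -> : (dotv u g <= 0) = false by rewrite leNgt ugp.
    apply => // h; case: (leP (dotv u h) 0) => // /ltW hh.
    exact: divr_ge0 (normr_ge0 _) hh.
  have hh : dotv w g + (1 + `|dotv w g| / dotv u g) * dotv u g <= dotv w g + lam * dotv u g.
    by rewrite lerD2l ler_wpM2r.
  have key : 0 <= dotv w g + `|dotv w g|.
    by case: (ltrP (dotv w g) 0) => h; [rewrite ltr0_norm // subrr|rewrite ger0_norm // addr_ge0].
  move: hh; rewrite mulrDl mul1r divfK // => hh.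
  by split; [|move=> _]; lra.
have Wa : dotv W a = 0 by rewrite /W dotvDl dotvZl wa ua mulr0 addr0.
exists W; split.
  by move=> x; apply: pcone_dot_ge0 => g /hW [].
move=> x; split.
  case=> c [c0 ->]; split; first exact: pconeZ.
  by rewrite dotvZr Wa mulr0.
case=> xS Wx.
have xL := pcone_filter0 (fun g hg => proj1 (hW g hg)) xS Wx.
have ux : dotv u x = 0.
  apply: (pcone_dot0 _ xL) => g; rewrite mem_filter => /andP [/eqP Wg gg].
  apply/eqP; apply: contraT => ugn0.
  by have := proj2 (hW g gg) ugn0; rewrite Wg ltxx.
have xM := hMgen xS ux.
have : pcone (a :: rem a M) x.
  apply: pcone_sub xM => c cM; apply: pcone_mem.
  by rewrite (perm_mem (perm_to_rem aM)) in cM.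
move=> /pcone_cons [t [z [t0 hz ex]]]; rewrite ex in Wx *.
have uz : dotv u z = 0.
  by apply: (pcone_dot0 _ hz) => c /mem_rem /hMS [].
have Wz : dotv W z = 0.
  by move: Wx; rewrite dotvDr dotvZr Wa mulr0 add0r.
have wz : dotv w z = 0 by move: Wz; rewrite /W dotvDl dotvZl uz mulr0 addr0.
rewrite (pcone_pos0 wb hz wz) addr0.
by exists t.
Qed.

Lemma ray_extremal : is_extremal_ray (pcone gens) (ray a).
Proof.
split; first exact: ray_face.
have [aa0 _ _] := hMS aM.
exists [:: a]; split => //.
- by move=> x; rewrite inE => /eqP ->; exists 1; rewrite scale1r; split => //; exact: ler01.
- by rewrite seq1_free.
- by move=> x [c [_ ->]]; rewrite span_seq1; apply: memvZ; exact: memv_line.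
Qed.


End FixA.
End Exposed2.

Section Vander.
Variable (R : realFieldType).

Definition hev (d : nat) (q : {poly R}) (a b : R) :=
  \sum_(k < d.+1) q`_k * (a ^+ (d - k) * b ^+ k).

Lemma hev_a d (q : {poly R}) (a b : R) : (size q <= d.+1)%N -> hev d.+1 q a b = a * hev d q a b.
Proof.
move=> sq; rewrite /hev big_ord_recr /= (nth_default 0 sq) mul0r addr0.
rewrite mulr_sumr; apply: eq_bigr => i _.
rewrite subSn; last by rewrite -ltnS.
by rewrite exprS; ring.
Qed.

Lemma hev_X d (q : {poly R}) (a b : R) : hev d.+1 ('X * q) a b = b * hev d q a b.
Proof.
rewrite /hev big_ord_recl /= coefXM eqxx mul0r add0r mulr_sumr.
apply: eq_bigr => i _; rewrite coefXM /= subSS exprS; ring.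
Qed.

Lemma hevD d (p q : {poly R}) (a b : R) : hev d (p + q) a b = hev d p a b + hev d q a b.
Proof. rewrite /hev -big_split; apply: eq_bigr => i _; by rewrite coefD /= mulrDl. Qed.

Lemma hevZ d (c : R) (q : {poly R}) (a b : R) : hev d (c *: q) a b = c * hev d q a b.
Proof. by rewrite /hev mulr_sumr; apply: eq_bigr => i _; rewrite coefZ -mulrA. Qed.

Definition Qf (fs : seq (R * R)) : {poly R} :=
  foldr (fun f q => f.1 *: q + f.2 *: ('X * q)) 1 fs.

Lemma Qf_spec fs (a b : R) : (size (Qf fs) <= (size fs).+1)%N /\
  hev (size fs) (Qf fs) a b = \prod_(f <- fs) (f.1 * a + f.2 * b).
Proof.
elim: fs => [|f fs [IH1 IH2]] /=.
  rewrite big_nil size_poly1; split => //.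
  by rewrite /hev big_ord1 coefC /= expr0 !mulr1.
split.
  apply: (leq_trans (size_polyD _ _)); rewrite geq_max; apply/andP; split.
    by apply: (leq_trans (size_scale_leq _ _)); apply: (leq_trans IH1).
  apply: (leq_trans (size_scale_leq _ _)); apply: (leq_trans (size_polyMleq _ _)).
  by rewrite size_polyX.
by rewrite big_cons hevD !hevZ hev_a // hev_X IH2; ring.
Qed.

Definition prow (m : nat) (a b : R) : 'rV[R]_(m.+1) :=
  \row_(k < m.+1) (a ^+ (m - k) * b ^+ k).

Definition lq (m : nat) (q : {poly R}) (v : 'rV[R]_(m.+1)) :=
  \sum_(k < m.+1) q`_k * v 0 k.

Lemma lq_prow m (q : {poly R}) (a b : R) : lq q (prow m a b) = hev m q a b.
Proof. by apply: eq_bigr => k _; rewrite mxE. Qed.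

Lemma lq_sum m (q : {poly R}) (I : finType) (d : I -> R) (v : I -> 'rV[R]_(m.+1)) :
  lq q (\sum_i d i *: v i) = \sum_i d i * lq q (v i).
Proof.
rewrite /lq; under eq_bigr do rewrite summxE mulr_sumr.
rewrite exchange_big /=; apply: eq_bigr => i _; rewrite mulr_sumr.
by apply: eq_bigr => k _; rewrite mxE mulrCA.
Qed.

Lemma vander m k (A B : 'I_k -> R) :
  (k <= m.+1)%N ->
  (forall i, A i ^+ 2 + B i ^+ 2 != 0) ->
  (forall i j, i != j -> A i * B j - A j * B i != 0) ->
  forall d : 'I_k -> R, \sum_i d i *: prow m (A i) (B i) = 0 -> forall i, d i = 0.
Proof.
move=> km hAB hdist d hsum j.
pose fs := [seq (B i, - A i) | i <- enum 'I_k & i != j] ++ nseq (m - k.-1) (A j, B j).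
have sfs : size fs = m.
  rewrite size_cat size_nseq size_map size_filter.
  have h := count_predC (pred1 j) (enum 'I_k).
  rewrite size_enum_ord (count_uniq_mem _ (enum_uniq _)) mem_enum /= in h.
  have e : (count (fun i => i != j) (enum 'I_k)).+1 = k by rewrite -add1n.
  move: e km; set c := count _ _; lia.
pose q := Qf fs.
have hq : forall a b, hev m q a b = \prod_(f <- fs) (f.1 * a + f.2 * b).
  by move=> a b; have [_ <-] := Qf_spec fs a b; rewrite sfs.
have := congr1 (lq q) hsum.
rewrite lq_sum (bigD1 j) //= big1 => [|i ij]; last first.
  rewrite lq_prow hq; apply/eqP; rewrite mulf_eq0 prodf_seq_eq0; apply/orP; right.
  apply/hasP; exists (B i, - A i).
    by rewrite mem_cat map_f ?orTb // mem_filter ij mem_enum.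
  by rewrite /=; apply/eqP; ring.
rewrite addr0 lq_prow hq.
have -> : lq q (0 : 'rV[R]_(m.+1)) = 0 by rewrite /lq; apply: big1 => i _; rewrite mxE mulr0.
move/eqP; rewrite mulf_eq0 => /orP [/eqP //|].
rewrite prodf_seq_eq0 => /hasP [f].
rewrite mem_cat => /orP [/mapP [i]|/nseqP [-> _]] /=.
  rewrite mem_filter mem_enum andbT => ij -> /=.
  move=> /eqP h; have e : A i * B j - A j * B i = 0 by rewrite -oppr0 -h; ring.
  by move: (hdist i j ij); rewrite e eqxx.
by move=> h; move: (hAB j); rewrite -!expr2 in h; rewrite h.
Qed.

End Vander.

Section Main.
Variables (R : realFieldType) (m : nat).
Notation vec := 'rV[R]_(m.+1).
Variables (gens : seq vec) (u : vec) (M : seq vec).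
Hypothesis hpt : pointed (pcone gens).
Hypothesis hu : forall x, pcone gens x -> 0 <= dotv u x.
Hypothesis hMS : forall a, a \in M -> [/\ a != 0, dotv u a = 0 & pcone gens a].
Hypothesis hMmin : forall a, a \in M -> ~ pcone (rem a M) a.
Hypothesis hMgen : forall x, pcone gens x -> dotv u x = 0 -> pcone M x.
Hypothesis hray : forall E, is_extremal_ray (pcone gens) E ->
     exists w : 'rV[R]_2, w != 0 /\ subs E (line (psi m w)).

Lemma M_uniq : uniq M.
Proof.
apply: count_mem_uniq => x; case: (boolP (x \in M)) => xM; last exact/count_memPn.
have h := count_mem_rem x x M; rewrite eqxx in h.
have : x \notin rem x M by apply/negP => hx; apply: (hMmin xM); exact: pcone_mem.
move/count_memPn; rewrite h => /eqP; rewrite subn_eq0 => h1.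
have : (0 < count_mem x M)%N by rewrite -has_count; apply/hasP; exists x => //=.
by move: h1; rewrite /=; lia.
Qed.

Lemma M_nonprop a b lam : a \in M -> b \in M -> a != b -> a <> lam *: b.
Proof.
move=> aM bM ab ea.
have [a0 _ aS] := hMS aM; have [b0 _ bS] := hMS bM.
case: (ltrgtP lam 0) => hl.
- have : - b = (- lam)^-1 *: a.
    by rewrite ea scalerA invrN mulNr mulVf ?lt_eqF // scaleN1r.
  move=> e; have := pointed_opp hpt bS; rewrite e => /(_ (pconeZ _ aS)).
  by rewrite invr_ge0 oppr_ge0 ltW // => /(_ isT) /eqP; rewrite (negbTE b0).
- apply: (hMmin aM); rewrite [X in pcone _ X]ea; apply: pconeZ; first exact: ltW.
  by apply: pcone_mem; rewrite rem_mem // eq_sym.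
- by move: a0; rewrite ea hl scale0r eqxx.
Qed.

Lemma prow_scale (mu a b : R) : prow m (mu * a) (mu * b) = mu ^+ m *: prow m a b.
Proof.
apply/rowP => k; rewrite !mxE !exprMn.
have hk : (k <= m)%N by rewrite -ltnS.
rewrite -[X in mu ^+ X](subnK hk) exprD; ring.
Qed.

Lemma M_repr a : a \in M -> exists t : R * R * R,
  [/\ t.2 != 0, t.1.1 ^+ 2 + t.1.2 ^+ 2 != 0 & a = t.2 *: prow m t.1.1 t.1.2].
Proof.
move=> aM; have [a0 ua aS] := hMS aM.
have [w [w0 hw]] := hray (ray_extremal hpt hu hMS hMmin hMgen aM).
have [c ec] : line (psi m w) a.
  by apply: hw; exists 1; split; [exact: ler01|rewrite scale1r].
exists (annih w 0 0, annih w 0 1, c); split => /=.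
- by apply: contraNneq a0 => c0; rewrite ec c0 scale0r.
- apply: contraNneq w0 => /eqP h; rewrite !mxE /= in h.
  move: h; rewrite paddr_eq0 ?sqr_ge0 // sqrf_eq0 oppr_eq0 sqrf_eq0 => /andP [/eqP h1 /eqP h2].
  apply/eqP/rowP => i; rewrite mxE; case: (ltnP i 1) => hi.
    by have -> : i = 0 :> 'I_2 by apply/val_inj => /=; lia.
  by have -> : i = 1 :> 'I_2 by apply/val_inj => /=; move: (ltn_ord i); lia.
- by rewrite ec.
Qed.

Lemma prop_pair (a b c d : R) : c ^+ 2 + d ^+ 2 != 0 -> a * d - c * b = 0 ->
  exists mu, a = mu * c /\ b = mu * d.
Proof.
move=> hcd h; case: (eqVneq c 0) => [c0|c0].
  have d0 : d != 0 by apply: contraNneq hcd => ->; rewrite c0 expr0n /= add0r.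
  exists (b / d); split; last by rewrite divfK.
  by move: h; rewrite c0 mul0r subr0 mulr0 => /eqP; rewrite mulf_eq0 (negbTE d0) orbF => /eqP.
exists (a / c); rewrite divfK //; split => //.
have e : c * b = a * d by apply/eqP; rewrite eq_sym -subr_eq0 h.
by apply: (mulfI c0); rewrite e; field.
Qed.

Lemma sub_free (T : seq vec) : uniq T -> {subset T <= M} -> (size T <= m.+1)%N -> free T.
Proof.
move=> uT TM sT.
apply/(@freeP _ _ _ (in_tuple T)) => k hk i.
have [f hf] := fin_all_exists (fun i : 'I_(size T) => M_repr (TM _ (mem_nth 0 (ltn_ord i)))).
have hv := @vander R m (size T) (fun i => (f i).1.1) (fun i => (f i).1.2) sT.
have hAB : forall j, (f j).1.1 ^+ 2 + (f j).1.2 ^+ 2 != 0 by move=> j; case: (hf j).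
have hd : forall j l, j != l -> (f j).1.1 * (f l).1.2 - (f l).1.1 * (f j).1.2 != 0.
  move=> j l jl; apply/negP => /eqP h.
  have [mu [e1 e2]] := prop_pair (hAB l) h.
  have neq : T`_j != T`_l by rewrite nth_uniq.
  apply: (M_nonprop (TM _ (mem_nth 0 (ltn_ord j))) (TM _ (mem_nth 0 (ltn_ord l))) neq
                    (lam := (f j).2 * mu ^+ m / (f l).2)).
  case: (hf j) => _ _ ->; case: (hf l) => cl0 _ ->.
  by rewrite e1 e2 prow_scale !scalerA divfK.
have hs : \sum_j (k j * (f j).2) *: prow m (f j).1.1 (f j).1.2 = 0.
  rewrite -[RHS]hk. apply: eq_big => // j _. case: (hf j) => _ _ ->.
  by rewrite scalerA.
have := hv hAB hd (fun i => k i * (f i).2) hs i.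
by move=> /eqP; rewrite mulf_eq0; case: (hf i) => /negbTE -> _ _; rewrite orbF => /eqP.
Qed.

End Main.

Lemma span_dim_le (R : realFieldType) n (A : vset R n) (s : seq 'rV[R]_n) d :
  free s -> (forall x, x \in s -> A x) -> span_dim A d -> (size s <= d)%N.
Proof.
move=> fs sA [t [st _ _ tsp]].
rewrite -(eqP fs) -st; apply: leq_trans (dim_span t); apply: dimvS.
by apply/span_subvP => x /sA /tsp.
Qed.

Lemma span_dim_uniq (R : realFieldType) n (A : vset R n) d1 d2 :
  span_dim A d1 -> span_dim A d2 -> d1 = d2.
Proof.
move=> h1 h2; have [s1 [e1 i1 f1 _]] := h1; have [s2 [e2 i2 f2 _]] := h2.
apply/eqP; rewrite eqn_leq; apply/andP; split.
  by rewrite -e1; exact: span_dim_le f1 i1 h2.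
by rewrite -e2; exact: span_dim_le f2 i2 h1.
Qed.

Unset Implicit Arguments.

Theorem theorem3p5 (R : realType) (m : nat) (hm : (2 <= m)%N)
    (gens : seq 'rV[R]_(m.+1)) :
  full_dim (pcone gens) ->
  pointed (pcone gens) ->
  (forall E, is_extremal_ray (pcone gens) E ->
     exists w : 'rV[R]_2, w != 0 /\ subs E (line (psi m w))) ->
  forall F, is_facet (pcone gens) F ->
    exists s : m.-tuple 'rV[R]_(m.+1),
      [/\ free s,
          (forall i : 'I_m, is_extremal_ray (pcone gens) (ray (tnth s i))
                            /\ subs (ray (tnth s i)) F) &
          (forall E, is_extremal_ray (pcone gens) E -> subs E F ->
             exists i : 'I_m, seteq E (ray (tnth s i)))].
Proof.
move=> hfull hpt hray F [[u [hu hF]] [d [hSd hFd]]].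
have dm : d = m by have := span_dim_uniq hSd hfull => -[].
subst d.
have hug : forall g, g \in gens -> 0 <= dotv u g by move=> g hg; apply: hu; exact: pcone_mem.
pose L0 := [seq g <- gens | (dotv u g == 0) && (g != 0)].
have [M [ML0 L0M Mmin]] := minimal_gen L0.
have hMS : forall a, a \in M -> [/\ a != 0, dotv u a = 0 & pcone gens a].
  move=> a /ML0; rewrite mem_filter => /andP [/andP [/eqP ua a0] ag].
  by split => //; exact: pcone_mem.
have hMgen : forall x, pcone gens x -> dotv u x = 0 -> pcone M x.
  move=> x xS ux; apply: pcone_sub (pcone_filter0 hug xS ux) => g.
  rewrite mem_filter => /andP [ug gg]; case: (eqVneq g 0) => [->|g0].
    exact: pcone0.
  by apply: L0M; rewrite mem_filter ug g0 gg.
have FM : forall x, F x -> pcone M x by move=> x /hF [xS ux]; exact: hMgen.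
have MF : forall x, pcone M x -> F x.
  move=> x xM; apply/hF; split; first exact: (pconeM_S hMS).
  by apply: (pcone_dot0 _ xM) => a /hMS [].
have uM := M_uniq Mmin.
have [sF [szF inF frF spF]] := hFd.
have le1 : (m <= size M)%N.
  have h1 : (\dim <<sF>> <= \dim <<M>>)%N.
    by apply: dimvS; apply/span_subvP => x /inF /FM /pcone_span.
  by have := leq_trans h1 (dim_span M); rewrite (eqP frF) szF.
have le2 : (size M <= m)%N.
  rewrite leqNgt; apply/negP => hlt.
  pose T := take m.+1 M.
  have sT : size T = m.+1 by rewrite size_takel.
  have fT : free T.
    apply: (sub_free hpt hu hMS Mmin hMgen hray (take_uniq _ uM)); last by rewrite sT.
    by move=> x /mem_take.
  have := span_dim_le fT (fun x hx => MF _ (pcone_mem (mem_take hx))) hFd.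
  by rewrite sT ltnn.
have sM : size M = m by apply/eqP; rewrite eqn_leq le1 le2.
have sMb : size M == m by rewrite sM.
have fM : free M.
  by apply: (sub_free hpt hu hMS Mmin hMgen hray uM) => //; rewrite sM.
exists (Tuple sMb); split => //.
  move=> i; have aM : tnth (Tuple sMb) i \in M := mem_tnth i (Tuple sMb).
  split; first exact: (ray_extremal hpt hu hMS Mmin hMgen aM).
  by move=> x [c [c0 ->]]; apply: MF; apply: pconeZ c0 _; exact: pcone_mem.
move=> E [[v [hv hE]] [s1 [sz1 in1 fr1 sp1]]] EF.
case: s1 sz1 in1 fr1 sp1 => [|e [|//]] //= _ in1 fr1 sp1.
have eE : E e by apply: in1; rewrite inE.
have e0 : e != 0 by rewrite seq1_free in fr1.
have [eS ve] := (hE e).1 eE.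
have hvM : forall g, g \in M -> 0 <= dotv v g.
  by move=> g gM; apply: hv; apply: (pconeM_S hMS); exact: pcone_mem.
have hfe := pcone_filter0 hvM (FM _ (EF _ eE)) ve.
case Hl : [seq g <- M | dotv v g == 0] hfe => [|g l] hfe.
  by move/pcone_nil: hfe => e00; rewrite e00 eqxx in e0.
have : g \in [seq g <- M | dotv v g == 0] by rewrite Hl mem_head.
rewrite mem_filter => /andP [/eqP vg gM].
have [g0 _ gS] := hMS g gM.
have gE : E g by apply/hE.
have [c ec] : exists c, g = c *: e by apply/vlineP; rewrite -span_seq1; exact: sp1.
have c0 : c != 0 by apply: contraNneq g0 => c00; rewrite ec c00 scale0r.
have gT : g \in Tuple sMb by [].
have [i ei] := tnthP _ _ gT.
exists i; rewrite -ei => x; split => [xE|[t [t0 ->]]]; last first.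
  by apply/hE; split; [exact: pconeZ|rewrite dotvZr vg mulr0].
have [xS vx] := (hE x).1 xE.
have [c' ec'] : exists c', x = c' *: e by apply/vlineP; rewrite -span_seq1; exact: sp1.
have xg : x = (c' / c) *: g by rewrite ec scalerA divfK.
case: (eqVneq x 0) => [->|x0]; first by exists 0; rewrite scale0r; split.
case: (lerP 0 (c' / c)) => hl; first by exists (c' / c).
exfalso; have := pointed_opp hpt gS.
have -> : - g = (- (c' / c))^-1 *: x.
  rewrite xg scalerA invrN mulNr mulVf ?lt_eqF // scaleN1r //.
move=> /(_ (pconeZ _ xS)); rewrite invr_ge0 oppr_ge0 (ltW hl) => /(_ isT) g00.
by rewrite g00 eqxx in g0.
Qed.
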